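(* Let $\phi\in\,]0,\pi[$, $M\in\mathbb{R}$, $N>0$, let $\Sigma$ be the Keplerian branch around ${\rm O}$ in the plane ${\rm O}xy$ with equation $r=My+N$, and let $g$ be the affine map $(x_1,y_1)\mapsto(x_3,y_3)$ defined by $x_1=x_3-M\frac{\cos\phi}{\sin\phi}y_3-N\cos\phi$, $y_1=\frac{1}{\sin\phi}y_3$. Let a Keplerian orbit describe $\Sigma$, with areal constant $C$ and energy $H$, and consider the Keplerian orbit describing $g(\Sigma)$ in the direction induced by $g$. Then its areal constant is $C\sin\phi$ (the areal constant is multiplied by $\sin\phi$, as the areas are), and its energy equals $H$.
   Context: In the Euclidean plane ${\rm O}xy$, $r=\sqrt{x^2+y^2}$, and Newton's system $\ddot q=-q/r^3$ for $q=(x,y)$. The areal constant (angular momentum) is $C=x\dot y-y\dot x$ and the energy is $H=\frac12(\dot x^2+\dot y^2)-\frac1r$, both constant along solutions. A Keplerian branch is the image of a solution; for $\gamma>0$, the set $r=\alpha x+\beta y+\gamma$ is a Keplerian branch, described by exactly two Keplerian orbits (differing in orientation), which have $C^2=\gamma$. The image $g(\Sigma)$ is the Keplerian branch $r=x\cos\phi+yM\sin\phi+N\sin^2\phi$; $g$ maps the oriented curve $\Sigma$ onto an oriented curve, and the image orbit is the Keplerian orbit describing $g(\Sigma)$ in that direction, time-parametrized as a solution of Newton's system. *)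

(* Defs.v *)
From Stdlib Require Import Reals.
From Coquelicot Require Import Coquelicot.
Open Scope R_scope.

Definition pt := (R * R)%type.

Definition rad (z : pt) : R := sqrt (fst z ^ 2 + snd z ^ 2).

Definition newton_sol (x y : R -> R) : Prop :=
  (forall t, x t ^ 2 + y t ^ 2 <> 0) /\
  (forall t, ex_derive x t /\ ex_derive y t) /\
  (forall t, is_derive (Derive x) t (- x t / (rad (x t, y t)) ^ 3) /\
             is_derive (Derive y) t (- y t / (rad (x t, y t)) ^ 3)).

Definition areal (x y : R -> R) (t : R) : R :=
  x t * Derive y t - y t * Derive x t.

Definition energy (x y : R -> R) (t : R) : R :=
  / 2 * (Derive x t ^ 2 + Derive y t ^ 2) - / rad (x t, y t).

Definition describes (x y : R -> R) (S : pt -> Prop) : Prop :=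
  forall z, (exists t, (x t, y t) = z) <-> S z.

Definition Sigma (M N : R) (z : pt) : Prop := rad z = M * snd z + N.

(* The affine map g : (x1,y1) |-> (x3,y3), written explicitly; it is the
   inverse of  x1 = x3 - M (cos phi / sin phi) y3 - N cos phi,
               y1 = y3 / sin phi. *)
Definition g (phi M N : R) (z : pt) : pt :=
  (fst z + M * cos phi * snd z + N * cos phi, sin phi * snd z).

Definition image_set (f : pt -> pt) (S : pt -> Prop) (w : pt) : Prop :=
  exists z, S z /\ f z = w.

(* Main.v *)
Require Import Defs.
From Stdlib Require Import Reals Lra Psatz.
From Coquelicot Require Import Coquelicot.
Open Scope R_scope.
Lemma alg (x y a b r al be ga : R) :
  0 < r -> r ^ 2 = x ^ 2 + y ^ 2 -> r = al * x + be * y + ga -> 0 < ga ->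
  x * a + y * b = (al * a + be * b) * r ->
  a ^ 2 + x * (- x / r ^ 3) + b ^ 2 + y * (- y / r ^ 3) =
    (al * (- x / r ^ 3) + be * (- y / r ^ 3)) * r + (al * a + be * b) ^ 2 ->
  (x * b - y * a) ^ 2 = ga /\
  / 2 * (a ^ 2 + b ^ 2) - / r = (al ^ 2 + be ^ 2 - 1) / (2 * ga).
Proof.
  intros hr hr2 hrl hga E1 E2.
  set (i := / r) in *.
  assert (hi : r * i = 1) by (unfold i; field; lra).
  assert (K : forall z, - z / r ^ 3 = - z * i^3) by (intro; unfold i; field; lra).
  rewrite !K in E2.
  assert (L : (x * b - y * a) ^ 2 + (x*a+y*b)^2 = r^2 * (a^2+b^2)) by (rewrite hr2; ring).
  assert (E2' : r^2*(a^2+b^2) - r = - (al*x+be*y) + (al*a+be*b)^2*r^2).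
  { assert (E3 : r^3 * (a ^ 2 + x * (- x * i ^ 3) + b ^ 2 + y * (- y * i ^ 3)) =
       r^3 * ((al * (- x * i ^ 3) + be * (- y * i ^ 3)) * r + (al * a + be * b) ^ 2)) by (rewrite E2; auto).
    replace (r ^ 3 * (a ^ 2 + x * (- x * i ^ 3) + b ^ 2 + y * (- y * i ^ 3))) with
       (r^3*(a^2+b^2) - (x^2+y^2)*(r*i)^3) in E3 by ring.
    replace (r ^ 3 * ((al * (- x * i ^ 3) + be * (- y * i ^ 3)) * r + (al * a + be * b) ^ 2))
      with (- (al*x+be*y) * r * (r*i)^3 + r^3*(al * a + be * b) ^ 2) in E3 by ring.
    rewrite hi, <- hr2 in E3.
    apply (Rmult_eq_reg_l r); [|lra]. nra. }
  assert (HC : (x * b - y * a) ^ 2 = ga).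
  { rewrite E1 in L. nra. }
  split; [exact HC|].
  set (C := x*b - y*a) in *. set (D := al*a+be*b) in *.
  assert (HD : D * r * ga = C * (be * x - al * y)).
  { assert (r^2 * a = x * (x*a+y*b) - y * C) by (unfold C; rewrite hr2; ring).
    assert (r^2 * b = y * (x*a+y*b) + x * C) by (unfold C; rewrite hr2; ring).
    assert (H1 : r^2 * D = D*r*(al*x+be*y) + C*(be*x-al*y)).
    { replace (r^2*D) with (al*(r^2*a) + be*(r^2*b)) by (unfold D; ring).
      rewrite H, H0, E1. ring. }
    replace ga with (r - (al*x+be*y)) by lra. lra. }
  set (Q := be*x - al*y) in *.
  assert (V1 : ga * (D^2*r^2) = Q^2).
  { apply (Rmult_eq_reg_l ga); [|lra].
    replace (ga * (ga * (D ^ 2 * r ^ 2))) with ((D*r*ga)^2) by ring.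
    rewrite HD. rewrite <- HC. ring. }
  assert (V : r^2*(a^2+b^2) = ga + Q^2/ga).
  { rewrite <- L, HC, E1. rewrite <- V1. field. lra. }
  assert (P0 : ga^2 + Q^2 - 2*ga*r = (al^2+be^2-1)*r^2).
  { unfold Q. replace ga with (r - (al*x+be*y)) by lra.
    replace ((al ^ 2 + be ^ 2 - 1) * r ^ 2) with ((al ^ 2 + be ^ 2) * (x^2+y^2) - r^2) by (rewrite hr2; ring).
    ring. }
  assert (Hab : a^2+b^2 = (ga + Q^2/ga) / r^2) by (rewrite <- V; field; lra).
  rewrite Hab. unfold i.
  apply (Rmult_eq_reg_l (2*ga*r^2)). 2: apply Rmult_integral_contrapositive; split; nra.
  field_simplify; [|lra|lra].
  replace (r ^ 2 * al ^ 2 + r ^ 2 * be ^ 2 - r ^ 2) with ((al^2+be^2-1)*r^2) by ring.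
  rewrite <- P0. ring.
Qed.
Lemma zero_deriv (F : R -> R) t l : (forall t, F t = 0) -> is_derive F t l -> l = 0.
Proof.
  intros H0 A.
  assert (B : is_derive F t 0).
  { apply is_derive_ext with (fun _ => 0). intro; rewrite H0; auto. auto_derive; auto; ring. }
  rewrite <- (is_derive_unique _ _ _ A). apply (is_derive_unique _ _ _ B).
Qed.
Lemma test2 (x y : R -> R) (al be ga : R) (hq : newton_sol x y) t :
  (forall t, x t * Derive x t + y t * Derive y t - (al * Derive x t + be * Derive y t) * (al * x t + be * y t + ga) = 0) ->
  Derive x t ^ 2 + x t * (- x t / rad (x t, y t) ^ 3) + Derive y t ^ 2 + y t * (- y t / rad (x t, y t) ^ 3) =
    (al * (- x t / rad (x t, y t) ^ 3) + be * (- y t / rad (x t, y t) ^ 3)) * (al * x t + be * y t + ga) + (al * Derive x t + be * Derive y t) ^ 2.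
Proof.
  intros H0.
  destruct hq as [hnz [hd hdd]].
  destruct (hdd t) as [Hx Hy].
  apply Rminus_diag_uniq.
  apply (zero_deriv _ t _ H0).
  auto_derive.
  - destruct (hd t). repeat split; auto; eexists; eauto.
  - change (fun x0 : R => x x0) with x; change (fun x : R => y x) with y.
    change (fun x0 : R => Derive x x0) with (Derive x); change (fun x : R => Derive y x) with (Derive y).
    rewrite (is_derive_unique _ _ _ Hx), (is_derive_unique _ _ _ Hy). ring.
Qed.
Lemma test1 (x y : R -> R) (al be ga : R) (hq : newton_sol x y) t :
  (forall t, x t ^ 2 + y t ^ 2 - (al * x t + be * y t + ga) ^ 2 = 0) ->
  x t * Derive x t + y t * Derive y t - (al * Derive x t + be * Derive y t) * (al * x t + be * y t + ga) = 0.
Proof.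
  intros H0.
  destruct hq as [hnz [hd hdd]].
  assert (A : is_derive (fun t => x t ^ 2 + y t ^ 2 - (al * x t + be * y t + ga) ^ 2) t
     (2 * (x t * Derive x t + y t * Derive y t - (al * Derive x t + be * Derive y t) * (al * x t + be * y t + ga)))).
  { auto_derive. 
    - destruct (hd t); tauto.
    - change (fun x0 : R => x x0) with x; change (fun x : R => y x) with y. ring. }
  assert (B : is_derive (fun t => x t ^ 2 + y t ^ 2 - (al * x t + be * y t + ga) ^ 2) t 0).
  { apply is_derive_ext with (fun _ => 0). intro; rewrite H0; auto. auto_derive; auto; ring. }
  pose proof (is_derive_unique _ _ _ A). rewrite (is_derive_unique _ _ _ B) in H. lra.
Qed.
Lemma quot_sign (f : R -> R) t l : is_derive f t l -> l <> 0 ->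
  exists d : posreal, forall h, h <> 0 -> Rabs h < d -> ((f (t + h) - f t) / h) * l > 0.
Proof.
  intros A hl. apply is_derive_Reals in A.
  assert (he : 0 < Rabs l) by (apply Rabs_pos_lt; auto).
  destruct (A (Rabs l) he) as [d Hd]. exists d. intros h h0 hh.
  specialize (Hd h h0 hh). revert Hd. set (q := (f (t + h) - f t) / h).
  unfold Rabs; repeat destruct Rcase_abs; intros; nra.
Qed.
Lemma sign_lemma (f gg s : R -> R) K t0 l1 l2 : 0 < K -> continuous s t0 ->
  (forall t1 t2, t1 < t2 -> s t1 < s t2) -> (forall t, gg (s t) = K * f t) ->
  is_derive f t0 l1 -> is_derive gg (s t0) l2 -> l1 * l2 < 0 -> False.
Proof.
  intros hK hc hs hfg D1 D2 hl.
  assert (l1 <> 0) by (intro; subst; lra).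
  assert (l2 <> 0) by (intro; subst; lra).
  destruct (quot_sign _ _ _ D1 H) as [d1 H1].
  destruct (quot_sign _ _ _ D2 H0) as [d2 H2].
  apply continuity_pt_filterlim in hc.
  rewrite continuity_pt_locally in hc.
  destruct (hc d2) as [d3 H3].
  set (h := Rmin d1 d3 / 2).
  assert (hpos : 0 < h) by (unfold h; destruct d1, d3; simpl; unfold Rmin; destruct Rle_dec; lra).
  assert (hd1 : h < d1) by (unfold h; destruct d1, d3; simpl; unfold Rmin; destruct Rle_dec; simpl in *; lra).
  assert (hd3 : h < d3) by (unfold h; destruct d1, d3; simpl; unfold Rmin; destruct Rle_dec; simpl in *; lra).
  assert (B : ball t0 d3 (t0 + h)).
  { unfold ball; simpl; unfold AbsRing_ball, abs, minus, plus, opp; simpl.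
    replace (t0 + h + - t0) with h by ring. rewrite Rabs_pos_eq; lra. }
  specialize (H3 _ B). simpl in H3.
  set (k := s (t0 + h) - s t0).
  assert (kpos : 0 < k) by (unfold k; specialize (hs t0 (t0+h)); lra).
  assert (kd : Rabs k < d2) by exact H3.
  specialize (H1 h ltac:(lra) ltac:(rewrite Rabs_pos_eq; lra)).
  specialize (H2 k ltac:(lra) kd).
  replace (s t0 + k) with (s (t0 + h)) in H2 by (unfold k; ring).
  rewrite !hfg in H2.
  set (d := f (t0 + h) - f t0) in *.
  replace ((K * f (t0 + h) - K * f t0) / k) with (K * d / k) in H2 by (unfold d; field; lra).
  set (q1 := d / h) in *. set (q2 := K * d / k) in *.
  assert (E1 : q1 * h = d) by (unfold q1; field; lra).
  assert (E2 : q2 * k = K * d) by (unfold q2; field; lra).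
  assert (q1 * q2 * (h * k) >= 0) by (replace (q1 * q2 * (h * k)) with ((q1 * h) * (q2 * k)) by ring; rewrite E1, E2; nra).
  assert (hk : h * k > 0) by nra.
  assert (q1 * q2 >= 0).
  { destruct (Rlt_or_le (q1 * q2) 0) as [Hn|]; [|lra].
    assert (q1 * q2 * (h * k) < 0) by (apply Rmult_neg_pos; lra). lra. }
  assert (q1 * l1 * (q2 * l2) > 0) by (apply Rmult_gt_0_compat; lra).
  replace (q1 * l1 * (q2 * l2)) with ((q1 * q2) * (l1 * l2)) in H6 by ring.
  nra.
Qed.
Lemma rad_facts (z : pt) : fst z ^ 2 + snd z ^ 2 <> 0 ->
  0 < rad z /\ rad z ^ 2 = fst z ^ 2 + snd z ^ 2.
Proof.
  intro h. unfold rad. split.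
  - apply sqrt_lt_R0. nra.
  - rewrite pow2_sqrt; nra.
Qed.

Lemma kb (x y : R -> R) (al be ga : R) (hq : newton_sol x y) :
  (forall t, rad (x t, y t) = al * x t + be * y t + ga) -> 0 < ga ->
  forall t, areal x y t ^ 2 = ga /\ energy x y t = (al ^ 2 + be ^ 2 - 1) / (2 * ga).
Proof.
  intros hS hga t.
  assert (F0 : forall t, x t ^ 2 + y t ^ 2 - (al * x t + be * y t + ga) ^ 2 = 0).
  { intro t0. rewrite <- hS. destruct hq as [hnz _].
    destruct (rad_facts (x t0, y t0) (hnz t0)) as [_ e]. cbn [fst snd] in e. rewrite <- e. ring. }
  pose proof (fun t => test1 x y al be ga hq t F0) as F1.
  pose proof (test2 x y al be ga hq t F1) as F2.
  destruct hq as [hnz _].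
  destruct (rad_facts (x t, y t) (hnz t)) as [hr hr2]. cbn [fst snd] in hr2.
  pose proof (alg (x t) (y t) (Derive x t) (Derive y t) (rad (x t, y t)) al be ga hr hr2 (hS t) hga) as A.
  rewrite <- (hS t) in F2.
  specialize (F1 t). rewrite <- (hS t) in F1.
  destruct A as [A1 A2]. lra. exact F2.
  unfold areal, energy. split; [exact A1|exact A2].
Qed.

Lemma areal_const (x y : R -> R) (hq : newton_sol x y) : forall t t', areal x y t = areal x y t'.
Proof.
  destruct hq as [hnz [hd hdd]].
  assert (D : forall t, derivable_pt_lim (areal x y) t 0).
  { intro t. apply is_derive_Reals. unfold areal.
    destruct (hdd t) as [Hx Hy].
    auto_derive.
    - destruct (hd t). repeat split; auto; eexists; eauto.
    - change (fun x0 : R => x x0) with x; change (fun x : R => y x) with y.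
      change (fun x0 : R => Derive x x0) with (Derive x); change (fun x : R => Derive y x) with (Derive y).
      rewrite (is_derive_unique _ _ _ Hx), (is_derive_unique _ _ _ Hy). field.
      destruct (rad_facts (x t, y t) (hnz t)). lra. }
  intros t t'.
  destruct (MVT_abs (areal x y) (fun _ => 0) t' t) as [c [Hc _]].
  { intros; apply D. }
  rewrite Rabs_R0, Rmult_0_l in Hc.
  apply Rabs_eq_0 in Hc. lra.
Qed.

Theorem lemma9 (phi M N : R) (hphi : 0 < phi < PI) (hN : 0 < N)
  (x y : R -> R) (hq : newton_sol x y) (hqS : describes x y (Sigma M N))
  (u v : R -> R) (hp : newton_sol u v)
  (hpS : describes u v (image_set (g phi M N) (Sigma M N)))
  (hdir : exists s : R -> R,
      (forall t, continuous s t) /\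
      (forall t1 t2, t1 < t2 -> s t1 < s t2) /\
      (forall t, (u (s t), v (s t)) = g phi M N (x t, y t))) :
  forall t t' : R,
    areal u v t = sin phi * areal x y t' /\ energy u v t = energy x y t'.
Proof.
  intros t t'.
  assert (hs : 0 < sin phi) by (apply sin_gt_0; lra).
  pose proof (sin2_cos2 phi) as hsc. unfold Rsqr in hsc.
  set (c := cos phi) in *. set (sn := sin phi) in *.
  assert (hc1 : 0 < 1 + c) by nra.
  assert (KX : forall t, areal x y t ^ 2 = N /\ energy x y t = (0 ^ 2 + M ^ 2 - 1) / (2 * N)).
  { apply kb; auto. intro t0. assert (Sigma M N (x t0, y t0)) by (apply hqS; eauto).
    unfold Sigma in H. simpl in H. rewrite H. ring. }
  assert (KU : forall t, areal u v t ^ 2 = N * sn ^ 2 /\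
     energy u v t = (c ^ 2 + (M * sn) ^ 2 - 1) / (2 * (N * sn ^ 2))).
  { apply kb; [exact hp| |apply Rmult_lt_0_compat; [lra|apply pow_lt; lra]]. intro t0.
    assert (H : image_set (g phi M N) (Sigma M N) (u t0, v t0)) by (apply hpS; eauto).
    destruct H as [[a b] [hS hg]]. unfold Sigma in hS. cbn [fst snd] in hS.
    unfold g in hg. cbn [fst snd] in hg. fold c sn in hg.
    injection hg as hu hv. rewrite <- hu, <- hv.
    set (r := rad (a, b)) in *.
    assert (hr0 : 0 <= r) by (unfold r, rad; apply sqrt_pos).
    assert (hr2 : r * r = a ^ 2 + b ^ 2) by (unfold r, rad; cbn [fst snd]; rewrite sqrt_sqrt; nra).
    assert (hB : 0 <= c * a + r).
    { assert ((c * a) ^ 2 <= r ^ 2) by nra. nra. }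
    unfold rad. cbn [fst snd].
    replace (c * (a + M * c * b + N * c) + M * sn * (sn * b) + N * sn ^ 2) with (c * a + r).
    2: { rewrite hS.
         assert (Hd : c * (a + M * c * b + N * c) + M * sn * (sn * b) + N * sn ^ 2 - (c * a + (M * b + N))
                 = (M * b + N) * (sn * sn + c * c - 1)) by ring.
         rewrite hsc in Hd. lra. }
    replace ((a + M * c * b + N * c) ^ 2 + (sn * b) ^ 2) with ((c * a + r) ^ 2).
    - apply sqrt_pow2; auto.
    - replace (a + M * c * b + N * c) with (a + c * r) by (rewrite hS; ring).
      assert (Hd : (a + c * r) ^ 2 + (sn * b) ^ 2 - (c * a + r) ^ 2 =
         (sn * sn + c * c - 1) * b ^ 2 + (1 - c * c) * (a ^ 2 + b ^ 2 - r * r)) by ring.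
      rewrite hsc, hr2 in Hd. lra. }
  split.
  2: { destruct (KU t) as [_ ->]. destruct (KX t') as [_ ->]. replace (c ^ 2) with (c * c) by ring. replace (c * c) with (1 - sn * sn) by lra. field; split; lra. }
  destruct hdir as [s [hcs [hsm hsg]]].
  destruct (proj2 (hqS (N, 0))) as [t0 ht0].
  { unfold Sigma, rad; cbn [fst snd]. replace (N ^ 2 + 0 ^ 2) with (N ^ 2) by ring.
    rewrite sqrt_pow2; lra. }
  injection ht0 as hx0 hy0.
  rewrite (areal_const u v hp t (s t0)), (areal_const x y hq t' t0).
  pose proof (hsg t0) as hg0. rewrite hx0, hy0 in hg0. unfold g in hg0; cbn [fst snd] in hg0.
  injection hg0 as hu0 hv0. fold c sn in hu0, hv0.
  assert (Ax : areal x y t0 = N * Derive y t0) by (unfold areal; rewrite hx0, hy0; ring).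
  assert (Au : areal u v (s t0) = N * (1 + c) * Derive v (s t0)) by (unfold areal; rewrite hu0, hv0; ring).
  assert (SG : ~ (Derive y t0 * Derive v (s t0) < 0)).
  { intro Hlt. destruct hq as [_ [hdx _]]. destruct hp as [_ [hdu _]].
    apply (sign_lemma y v s sn t0 (Derive y t0) (Derive v (s t0))); auto.
    - intro t1. pose proof (hsg t1) as e. unfold g in e. cbn [fst snd] in e.
      injection e as _ e. exact e.
    - apply Derive_correct. apply hdx.
    - apply Derive_correct. apply hdu. }
  destruct (KX t0) as [X2 _]. destruct (KU (s t0)) as [U2 _].
  set (A := areal u v (s t0)) in *. set (B := areal x y t0) in *.
  assert (AB : A * B >= 0).
  { rewrite Au, Ax. replace (N * (1 + c) * Derive v (s t0) * (N * Derive y t0)) with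
      ((N * N * (1 + c)) * (Derive y t0 * Derive v (s t0))) by ring.
    apply Rle_ge, Rmult_le_pos; [|lra]. apply Rmult_le_pos; nra. }
  assert (E : (A - sn * B) * (A + sn * B) = 0) by nra.
  apply Rmult_integral in E. destruct E as [E|E]; [lra|].
  assert (A = - (sn * B)) by lra.
  assert (- sn * (B * B) >= 0) by (rewrite H in AB; nra).
  nra.
Qed.
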